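(* Let $n\ge1$. Every unitary on $n$ qubits of the form $C\,Z\,L$ (a $\textsc{P}$-layer $L$ applied first, then a $\textsc{CZ}$-layer $Z$, then a $\textsc{C}$-layer $C$; stage form -P-CZ-C-) can also be written as $Z'L'C'$ (stage form -C-P-CZ-) for some $\textsc{C}$-layer $C'$, $\textsc{P}$-layer $L'$ and $\textsc{CZ}$-layer $Z'$; and, since $\textsc{P}$-layers and $\textsc{CZ}$-layers commute, also in the stage forms -CZ-P-C- and -C-CZ-P-.
   Context: Gates: $\textsc{P}=\mathrm{diag}(1,i)$, $\textsc{CNOT}|a,b\rangle=|a,a\oplus b\rangle$, $\textsc{CZ}|a,b\rangle=(-1)^{ab}|a,b\rangle$. Layers on $n$ qubits: a $\textsc{P}$-layer is $\bigotimes_{j=1}^n \textsc{P}^{a_j}$ with $a_j\in\{0,1,2,3\}$; a $\textsc{C}$-layer is any unitary implemented by a circuit of $\textsc{CNOT}$ gates (equivalently $|x\rangle\mapsto|Ax\rangle$ for an invertible matrix $A$ over $\mathbb F_2$); a $\textsc{CZ}$-layer is any product of $\textsc{CZ}$ gates on pairs of the $n$ qubits. Stage notation -X-Y-Z- means X is applied first, then Y, then Z (operator product $ZYX$). *)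

(* Defs.v *)
From HB Require Import structures.
From mathcomp Require Import all_boot all_order all_algebra all_field.
Set Implicit Arguments. Unset Strict Implicit. Unset Printing Implicit Defensive.
Import Order.TTheory GRing.Theory Num.Theory.
Local Open Scope ring_scope.

(* Computational basis states of n qubits: bit vectors x in F_2^n (columns). *)
Definition basis (n : nat) := 'cV['F_2]_n.

(* An operator on n qubits, given by its matrix entries <x|U|y> in the
   computational basis, with complex (algebraic) entries. *)
Definition op (n : nat) := basis n -> basis n -> algC.

Definition opid (n : nat) : op n := fun x y => (x == y)%:R.

Definition opmul (n : nat) (U V : op n) : op n :=
  fun x y => \sum_(z : basis n) U x z * V z y.

Definition opeq (n : nat) (U V : op n) : Prop := forall x y, U x y = V x y.

Definition bit (n : nat) (x : basis n) (j : 'I_n) : bool := x j 0 != 0.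

(* P-layer  (x)_j P^{a_j},  P = diag(1, i): diagonal, entry
   prod_j (i^{a_j})^{x_j}. *)
Definition Player (n : nat) (a : 'I_n -> 'I_4) : op n :=
  fun x y => (x == y)%:R *
    \prod_(j < n) (if bit x j then 'i ^+ (a j : nat) else 1).

(* C-layer: |x> |-> |A x> for an invertible A over F_2. *)
Definition Clayer (n : nat) (A : 'M['F_2]_n) : op n :=
  fun x y => (x == A *m y)%:R.

Definition CZgate (n : nat) (i j : 'I_n) : op n :=
  fun x y => (x == y)%:R * (if bit x i && bit x j then -1 else 1).

Definition Zlayer (n : nat) (s : seq ('I_n * 'I_n)) : op n :=
  foldr (fun p U => opmul (CZgate p.1 p.2) U) (@opid n) s.

Definition pairs_ok (n : nat) (s : seq ('I_n * 'I_n)) : bool :=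
  all (fun p => p.1 != p.2) s.

(* Main.v *)
Require Import Defs.
From HB Require Import structures.
From mathcomp Require Import all_boot all_order all_algebra all_field.
From mathcomp Require Import ring.
Set Implicit Arguments. Unset Strict Implicit.
Import Order.TTheory GRing.Theory Num.Theory.
Local Open Scope ring_scope.

Lemma F2_cases (u : 'F_2) : u = 0 \/ u = 1.
Proof. move: u => [[|[|k]] Hk]. by left; exact: val_inj. by right; exact: val_inj. done. Qed.

Lemma F2_11 : (1 + 1 : 'F_2) = 0. Proof. by apply/eqP. Qed.

Definition sgn (u : 'F_2) : algC := if u != 0 then -1 else 1.
Definition ii (u : 'F_2) : algC := if u != 0 then 'i else 1.

Lemma sgn_add u v : sgn (u + v) = sgn u * sgn v.
Proof.
rewrite /sgn; case: (F2_cases u) => ->; case: (F2_cases v) => ->;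
  rewrite ?addr0 ?add0r ?F2_11 ?eqxx ?oner_eq0 /= ?mulr1 ?mul1r //.
by rewrite mulrNN mulr1.
Qed.

Lemma ii_add u v : ii (u + v) = ii u * ii v * sgn (u * v).
Proof.
rewrite /sgn /ii; case: (F2_cases u) => ->; case: (F2_cases v) => ->;
  rewrite ?addr0 ?add0r ?mulr0 ?mul0r ?mulr1 ?F2_11 ?eqxx ?oner_eq0 /= ?mulr1 ?mul1r //.
by rewrite -expr2 sqrCi mulrNN mulr1.
Qed.

Lemma sgn_sq u : sgn (u * u) = ii u ^+ 2.
Proof.
rewrite /sgn /ii; case: (F2_cases u) => ->;
  rewrite ?mulr0 ?mulr1 ?eqxx ?oner_eq0 /= ?expr1n ?sqrCi //.
Qed.

Lemma ii4 u : ii u ^+ 4 = 1.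
Proof.
rewrite /ii; case: (u != 0); last by rewrite expr1n.
by rewrite (_ : 4%N = (2 * 2)%N) // exprM sqrCi sqrrN expr1n.
Qed.

Lemma iiXmod u k : ii u ^+ (k %% 4) = ii u ^+ k.
Proof.
by rewrite {2}(divn_eq k 4) exprD mulnC exprM ii4 expr1n mul1r.
Qed.

Section S.
Variable n : nat.

Definition zph (s : seq ('I_n * 'I_n)) (x : basis n) : algC :=
  \prod_(p <- s) sgn (x p.1 0 * x p.2 0).
Definition pph (a : 'I_n -> 'I_4) (x : basis n) : algC :=
  \prod_(j < n) ii (x j 0) ^+ (a j).

Definition G (f : basis n -> algC) := exists a s, pairs_ok s /\ forall x, f x = pph a x * zph s x.

Lemma G_ext f g : G f -> (forall x, f x = g x) -> G g.
Proof. move=> [a [s [hs h]]] e; exists a, s; split=> // x; by rewrite -e h. Qed.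

Lemma G_one : G (fun _ => 1).
Proof.
exists (fun _ => ord0), [::]; split=> // x.
rewrite /zph /pph big_nil mulr1 big1 // => j _; by rewrite expr0.
Qed.

Lemma G_mul f g : G f -> G g -> G (fun x => f x * g x).
Proof.
move=> [a1 [s1 [h1 e1]]] [a2 [s2 [h2 e2]]].
exists (fun j => inZp (a1 j + a2 j)), (s1 ++ s2); split.
  by rewrite /pairs_ok all_cat; apply/andP.
move=> x; rewrite e1 e2 /zph /pph big_cat /=.
have E : (\prod_(j < n) ii (x j 0) ^+ ((inZp (a1 j + a2 j) : 'I_4) : nat)) =
   (\prod_(j < n) ii (x j 0) ^+ a1 j) * \prod_(j < n) ii (x j 0) ^+ a2 j.
  rewrite -big_split; apply: eq_bigr => j _ /=; by rewrite iiXmod exprD.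
rewrite E; ring.
Qed.

Lemma G_prod (I : Type) (r : seq I) (F : I -> basis n -> algC) :
  (forall i, G (F i)) -> G (fun x => \prod_(i <- r) F i x).
Proof.
move=> h; elim: r => [|i r IH].
  refine (G_ext G_one _) => x; by rewrite big_nil.
refine (G_ext (G_mul (h i) IH) _) => x; by rewrite big_cons.
Qed.

Lemma G_exp f k : G f -> G (fun x => f x ^+ k).
Proof.
move=> h; elim: k => [|k IH].
  refine (G_ext G_one _) => x; by rewrite expr0.
refine (G_ext (G_mul h IH) _) => x; by rewrite exprS.
Qed.

Lemma G_iiX l k : G (fun x => ii (x l 0) ^+ k).
Proof.
exists (fun j => if j == l then inZp k else ord0), [::]; split=> // x.
rewrite /zph big_nil mulr1 /pph (bigD1 l) //= eqxx iiXmod big1 ?mulr1 //.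
by move=> j /negbTE ->; rewrite expr0.
Qed.

Lemma G_pair l m : G (fun x => sgn (x l 0 * x m 0)).
Proof.
case: (eqVneq l m) => [<-|ne].
  refine (G_ext (G_iiX l 2) _) => x; by rewrite sgn_sq.
exists (fun _ => ord0), [:: (l, m)]; split; first by rewrite /pairs_ok /= ne.
move=> x; rewrite /zph big_seq1 /pph big1 ?mul1r // => j _; by rewrite expr0.
Qed.

Lemma sgn0 : sgn 0 = 1. Proof. by rewrite /sgn eqxx. Qed.
Lemma ii0 : ii 0 = 1. Proof. by rewrite /ii eqxx. Qed.

Lemma Gsgn_lin (r t : seq 'I_n) (c d : 'I_n -> 'F_2) :
  G (fun x => sgn ((\sum_(k <- r) c k * x k 0) * (\sum_(m <- t) d m * x m 0))).
Proof.
elim: r => [|k r IH].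
  refine (G_ext G_one _) => x; by rewrite big_nil mul0r sgn0.
have H1 : G (fun x => sgn (c k * x k 0 * (\sum_(m <- t) d m * x m 0))).
  elim: t {IH} => [|m t IHt].
    refine (G_ext G_one _) => x; by rewrite big_nil mulr0 sgn0.
  have H2 : G (fun x => sgn (c k * x k 0 * (d m * x m 0))).
    case: (F2_cases (c k)) => ->.
      refine (G_ext G_one _) => x; by rewrite mul0r mul0r sgn0.
    case: (F2_cases (d m)) => ->.
      refine (G_ext G_one _) => x; by rewrite mul0r mulr0 sgn0.
    refine (G_ext (G_pair k m) _) => x; by rewrite !mul1r.
  refine (G_ext (G_mul H2 IHt) _) => x; by rewrite big_cons mulrDr sgn_add.
refine (G_ext (G_mul H1 IH) _) => x; by rewrite big_cons mulrDl sgn_add.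
Qed.

Lemma Gii_lin (r : seq 'I_n) (c : 'I_n -> 'F_2) :
  G (fun x => ii (\sum_(k <- r) c k * x k 0)).
Proof.
elim: r => [|k r IH].
  refine (G_ext G_one _) => x; by rewrite big_nil ii0.
have H1 : G (fun x => ii (c k * x k 0)).
  case: (F2_cases (c k)) => ->.
    refine (G_ext G_one _) => x; by rewrite mul0r ii0.
  refine (G_ext (G_iiX k 1) _) => x; by rewrite mul1r expr1.
have H2 := Gsgn_lin [:: k] r c c.
refine (G_ext (G_mul (G_mul H1 IH) H2) _) => x.
by rewrite big_seq1 big_cons ii_add.
Qed.

Lemma G_main (B : 'M['F_2]_n) a s :
  G (fun x => zph s (B *m x) * pph a (B *m x)).
Proof.
apply: G_mul.
  apply: (@G_prod _ s (fun p x => sgn ((B *m x) p.1 0 * (B *m x) p.2 0))) => p.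
  refine (G_ext (Gsgn_lin (index_enum _) (index_enum _) (B p.1) (B p.2)) _) => x.
  by rewrite !mxE.
apply: (@G_prod _ (index_enum _) (fun j x => ii ((B *m x) j 0) ^+ a j)) => j.
refine (G_ext (G_exp (a j) (Gii_lin (index_enum _) (B j))) _) => x.
by rewrite !mxE.
Qed.

Lemma opmul_diagl (U V : op n) d x y :
  (forall x y, U x y = (x == y)%:R * d x) -> opmul U V x y = d x * V x y.
Proof.
move=> hU; rewrite /opmul (bigD1 x) //= hU eqxx mul1r big1 ?addr0 //.
by move=> z /negbTE hz; rewrite hU eq_sym hz mul0r mul0r.
Qed.

Lemma opmul_diagr (U V : op n) d x y :
  (forall x y, V x y = (x == y)%:R * d x) -> opmul U V x y = U x y * d y.
Proof.
move=> hV; rewrite /opmul (bigD1 y) //= hV eqxx mul1r big1 ?addr0 //.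
by move=> z /negbTE hz; rewrite hV hz mul0r mulr0.
Qed.

Lemma ZE s x y : Zlayer s x y = (x == y)%:R * zph s x.
Proof.
elim: s x y => [|p s IH] x y.
  by rewrite /zph big_nil mulr1.
rewrite /= (opmul_diagl _ (d := fun x => sgn (x p.1 0 * x p.2 0))).
  by rewrite IH /zph big_cons mulrCA.
move=> u v; rewrite /CZgate /sgn /bit mulf_eq0 negb_or.
by case: (_ && _).
Qed.

Lemma PE a x y : Player a x y = (x == y)%:R * pph a x.
Proof.
rewrite /Player /pph; congr (_ * _); apply: eq_bigr => j _.
by rewrite /bit /ii; case: (_ != 0); rewrite ?expr1n.
Qed.

End S.

Lemma UE n (A : 'M['F_2]_n) s a x y :
  opmul (Clayer A) (opmul (Zlayer s) (Player a)) x y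
  = (x == A *m y)%:R * (zph s y * pph a y).
Proof.
rewrite (@opmul_diagr _ _ _ (fun z => zph s z * pph a z)) //.
move=> u v; rewrite (@opmul_diagl _ _ _ (zph s)); last exact: ZE.
by rewrite PE mulrCA.
Qed.

Theorem mainTheorem2 (n : nat) (hn : (1 <= n)%N)
  (A : 'M['F_2]_n) (hA : A \in unitmx)
  (s : seq ('I_n * 'I_n)) (hs : pairs_ok s)
  (a : 'I_n -> 'I_4) :
  let U := opmul (Clayer A) (opmul (Zlayer s) (Player a)) in
  (* -C-P-CZ- : Z' L' C' *)
  (exists (A' : 'M['F_2]_n) (a' : 'I_n -> 'I_4) (s' : seq ('I_n * 'I_n)),
     [/\ A' \in unitmx, pairs_ok s' &
         opeq U (opmul (Zlayer s') (opmul (Player a') (Clayer A')))]) /\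
  (* -CZ-P-C- : C' L' Z' *)
  (exists (A' : 'M['F_2]_n) (a' : 'I_n -> 'I_4) (s' : seq ('I_n * 'I_n)),
     [/\ A' \in unitmx, pairs_ok s' &
         opeq U (opmul (Clayer A') (opmul (Player a') (Zlayer s')))]) /\
  (* -C-CZ-P- : L' Z' C' *)
  (exists (A' : 'M['F_2]_n) (a' : 'I_n -> 'I_4) (s' : seq ('I_n * 'I_n)),
     [/\ A' \in unitmx, pairs_ok s' &
         opeq U (opmul (Player a') (opmul (Zlayer s') (Clayer A')))]).
Proof.
move=> U.
have [a' [s' [hs' E]]] := G_main (invmx A) a s.
have key : forall y, zph s y * pph a y = pph a' (A *m y) * zph s' (A *m y).
  by move=> y; rewrite -E mulKmx.
split; [|split].
- exists A, a', s'; split=> // x y.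
  rewrite /U UE (@opmul_diagl _ _ _ (zph s')); last exact: ZE.
  rewrite (@opmul_diagl _ _ _ (pph a')); last exact: PE.
  rewrite /Clayer; case: eqP => [->|_]; last by rewrite !(mul0r, mulr0).
  by rewrite key (_ : true%:R = 1 :> algC) // mulr1 mul1r mulrC.
- exists A, a, s; split=> // x y.
  rewrite /U UE (@opmul_diagr _ _ _ (fun z => pph a z * zph s z)).
    rewrite /Clayer (mulrC (zph s y)); reflexivity.
  move=> u v; rewrite (@opmul_diagl _ _ _ (pph a)); last exact: PE.
  by rewrite ZE mulrCA.
- exists A, a', s'; split=> // x y.
  rewrite /U UE (@opmul_diagl _ _ _ (pph a')); last exact: PE.
  rewrite (@opmul_diagl _ _ _ (zph s')); last exact: ZE.
  rewrite /Clayer; case: eqP => [->|_]; last by rewrite !(mul0r, mulr0).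
  by rewrite key (_ : true%:R = 1 :> algC) // mulr1 mul1r mulrC.
Qed.
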